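(* Let $\mathcal{D}$ be a fixed probability distribution on $\mathcal{X}\times\{-1,+1\}$ with $\mathcal{X}\subseteq\mathbb{R}^d$, marginal $\mathcal{D}_\mathbf{x}$ and conditional label distribution $\mathcal{D}_y(\mathbf{x})$. For $\mathbf{w}\in\mathbb{R}^d$ let $h_\mathbf{w}(\mathbf{x})=\mathrm{sign}(\langle\mathbf{w},\mathbf{x}\rangle)$ and $\eta_\mathbf{w}(\mathbf{x})=\mathbb{P}_{y\sim\mathcal{D}_y(\mathbf{x})}[h_\mathbf{w}(\mathbf{x})\neq y]$. Let $R=\max_{\mathbf{x}\sim\mathcal{D}_\mathbf{x}}\|\mathbf{x}\|_2$ (the radius of the support of $\mathcal{D}_\mathbf{x}$) and $\gamma>0$, and let $$\widetilde{\mathbf{w}}=\mathop{\mathrm{argmin}}_{\mathbf{w},\|\mathbf{w}\|_2\le1}\mathbb{E}_{\mathbf{x}\sim\mathcal{D}_\mathbf{x}}\big[|\langle\mathbf{w},\mathbf{x}\rangle|\,\eta_\mathbf{w}(\mathbf{x})\,\big|\,|\langle\mathbf{w},\mathbf{x}\rangle|\ge\gamma\big],\qquad \bar{\mathbf{w}}=\mathop{\mathrm{argmin}}_{\mathbf{w},\|\mathbf{w}\|_2\le1}\mathbb{E}_{\mathbf{x}\sim\mathcal{D}_\mathbf{x}}\big[\eta_\mathbf{w}(\mathbf{x})\,\big|\,|\langle\mathbf{w},\mathbf{x}\rangle|\ge\gamma\big].$$ Then $$\frac{\gamma}{R}\,\mathbb{E}_{\mathbf{x}\sim\mathcal{D}_\mathbf{x}}\big[\eta_{\widetilde{\mathbf{w}}}(\mathbf{x})\,\big|\,|\langle\widetilde{\mathbf{w}},\mathbf{x}\rangle|\ge\gamma\big]\le\mathbb{E}_{\mathbf{x}\sim\mathcal{D}_\mathbf{x}}\big[\eta_{\bar{\mathbf{w}}}(\mathbf{x})\,\big|\,|\langle\bar{\mathbf{w}},\mathbf{x}\rangle|\ge\gamma\big]\le\mathbb{E}_{\mathbf{x}\sim\mathcal{D}_\mathbf{x}}\big[\eta_{\widetilde{\mathbf{w}}}(\mathbf{x})\,\big|\,|\langle\widetilde{\mathbf{w}},\mathbf{x}\rangle|\ge\gamma\big].$$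 *)

(* Defs.v *)
From HB Require Import structures.
From mathcomp Require Import all_boot all_order all_algebra.
From mathcomp Require Import all_classical all_reals all_analysis ess_sup_inf.
Set Implicit Arguments. Unset Strict Implicit. Unset Printing Implicit Defensive.
Import Order.TTheory GRing.Theory Num.Theory.
Import numFieldNormedType.Exports.
Local Open Scope classical_set_scope.
Local Open Scope ring_scope.

(** R^d with its Borel sigma-algebra (generated by the open sets of the
    product topology). Vectors are row vectors 'rV[R]_d. *)
Definition Rvec (R : realType) (d : nat) :=
  g_sigma_algebraType (@open 'rV[R]_d).

Definition dotp (R : realType) (d : nat) (u v : 'rV[R]_d) : R :=
  \sum_(i < d) u ord0 i * v ord0 i.
Definition norm2 (R : realType) (d : nat) (u : 'rV[R]_d) : R :=
  Num.sqrt (dotp u u).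

Definition hw (R : realType) (d : nat) (w x : 'rV[R]_d) : R :=
  Num.sg (dotp w x).

(** eta_w(x) = P_{y ~ D_y(x)} [h_w(x) <> y], where the conditional label
    distribution D_y(x) gives y = +1 with probability p x and y = -1 with
    probability 1 - p x. *)
Definition eta (R : realType) (d : nat) (p : 'rV[R]_d -> R) (w x : 'rV[R]_d) : R :=
  (if hw w x != 1 then p x else 0) + (if hw w x != -1 then 1 - p x else 0).

Definition margin_set (R : realType) (d : nat) (gamma : R) (w : 'rV[R]_d)
  : set (Rvec R d) := [set x | gamma <= `|dotp w x|].

Definition condE (R : realType) (d : nat) (P : probability (Rvec R d) R)
  (A : set (Rvec R d)) (f : Rvec R d -> R) : R :=
  Rintegral P A f / fine (P A).

Definition obj_tilde (R : realType) (d : nat) (P : probability (Rvec R d) R)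
  (p : 'rV[R]_d -> R) (gamma : R) (w : 'rV[R]_d) : R :=
  condE P (margin_set gamma w) (fun x => `|dotp w x| * eta p w x).
Definition obj_bar (R : realType) (d : nat) (P : probability (Rvec R d) R)
  (p : 'rV[R]_d -> R) (gamma : R) (w : 'rV[R]_d) : R :=
  condE P (margin_set gamma w) (fun x => eta p w x).

(** Feasible w: in the closed unit ball, and such that the conditioning
    event has positive probability (so the conditional expectation is
    defined). *)
Definition feasible (R : realType) (d : nat) (P : probability (Rvec R d) R)
  (gamma : R) (w : 'rV[R]_d) : Prop :=
  norm2 w <= 1 /\ (0 < P (margin_set gamma w))%E.

(* Main.v *)
Require Import Defs.
From HB Require Import structures.
From mathcomp Require Import all_boot all_order all_algebra.
From mathcomp Require Import all_classical all_reals all_analysis ess_sup_inf.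
From mathcomp Require Import measurable_realfun ring lra.
Import Order.TTheory GRing.Theory Num.Theory.
Import numFieldNormedType.Exports.
Local Open Scope classical_set_scope.
Local Open Scope ring_scope.

Section Helpers.
Section S.
Set Implicit Arguments. Unset Strict Implicit.
Variables (R : realType) (d : nat).

Lemma dotp_sq (u : 'rV[R]_d) : 0 <= dotp u u.
Proof. by apply: sumr_ge0 => i _; rewrite -expr2 sqr_ge0. Qed.

Lemma CS_sq (u v : 'rV[R]_d) : dotp u v ^+ 2 <= dotp u u * dotp v v.
Proof.
set a := dotp u u; set b := dotp v v; set c := dotp u v.
have H : 0 <= b * (a * b - c ^+ 2).
  have -> : b * (a * b - c ^+ 2) =
     \sum_(i < d) (b * u ord0 i - c * v ord0 i) ^+ 2.
    transitivity (\sum_(i < d) (b ^+ 2 * (u ord0 i * u ord0 i)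
        - (2 * b * c) * (u ord0 i * v ord0 i) + c ^+ 2 * (v ord0 i * v ord0 i))).
      rewrite big_split /= sumrB -!mulr_sumr.
      rewrite /a /b /c /dotp; ring.
    by apply: eq_bigr => i _; ring.
  by apply: sumr_ge0 => i _; rewrite sqr_ge0.
have [b0|bp] := eqVneq b 0.
  have v0 : forall i, v ord0 i = 0.
    move=> i; have := @psumr_eq0P _ _ xpredT (fun j => v ord0 j * v ord0 j).
    move=> /(_ (fun j _ => _)) h; apply/eqP; rewrite -[_ == 0]sqrf_eq0 expr2.
    by apply/eqP; apply: h => // j; rewrite -expr2 sqr_ge0.
  rewrite /c /dotp big1 ?expr0n ?mulr_ge0 ?dotp_sq //.
  by move=> i _; rewrite v0 mulr0.
have bg : 0 < b by rewrite lt_def bp dotp_sq.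
rewrite -subr_ge0; move: H; rewrite pmulr_rge0 //.
Qed.

Lemma CS (u v : 'rV[R]_d) : `|dotp u v| <= norm2 u * norm2 v.
Proof.
rewrite /norm2 -sqrtrM ?dotp_sq // -sqrtr_sqr.
by rewrite ler_sqrt ?mulr_ge0 ?dotp_sq // CS_sq.
Qed.

Lemma eta_bounds (p : 'rV[R]_d -> R) w x : 0 <= p x <= 1 ->
  0 <= Defs.eta p w x <= 1.
Proof.
move=> /andP[p0 p1]; rewrite /Defs.eta /hw.
have h1 : (0:R) != 1 by apply/eqP; lra.
have h2 : (0:R) != -1 by apply/eqP; lra.
have h3 : (1:R) != -1 by apply/eqP; lra.
have h4 : (-1:R) != 1 by apply/eqP; lra.
case: sgrP => _ /=; rewrite ?eqxx ?h1 ?h2 ?h3 ?h4 /=; apply/andP; split; lra.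
Qed.
Lemma coord_meas (i : 'I_d) :
  measurable_fun [set: Rvec R d] (fun x : Rvec R d => x ord0 i).
Proof.
apply: (measurability _ (RGenOpens.measurableE R)).
move=> _ [_ [a [b ->] <-]]; rewrite setTI.
apply: sub_sigma_algebra.
have := @coord_continuous R 1 d ord0 i.
move/continuousP => /(_ `]a, b[%classic); apply.
exact: interval_open.
Qed.

Lemma dotp_meas (w : 'rV[R]_d) :
  measurable_fun [set: Rvec R d] (fun x : Rvec R d => dotp w x).
Proof.
rewrite /dotp; apply: measurable_sum => i.
apply: measurable_funM; first exact: measurable_cst.
exact: coord_meas.
Qed.

Lemma eta_alt (p : 'rV[R]_d -> R) w x : Defs.eta p w x =
  (if dotp w x <= 0 then p x else 0) + (if 0 <= dotp w x then 1 - p x else 0).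
Proof.
rewrite /Defs.eta /hw.
have h1 : (0:R) != 1 by apply/eqP; lra.
have h2 : (0:R) != -1 by apply/eqP; lra.
have h3 : (1:R) != -1 by apply/eqP; lra.
have h4 : (-1:R) != 1 by apply/eqP; lra.
case: sgrP => h; rewrite ?eqxx ?h1 ?h2 ?h3 ?h4 /=.
all: by [].
Qed.

Lemma eta_meas (p : Rvec R d -> R) w : measurable_fun setT p ->
  measurable_fun [set: Rvec R d] (fun x => Defs.eta p w x).
Proof.
move=> mp.
rewrite (_ : (fun x => _) = (fun x : Rvec R d =>
  (if dotp w x <= 0 then p x else 0) + (if 0 <= dotp w x then 1 - p x else 0))); last first.
  by apply/funext => x; rewrite eta_alt.
apply: measurable_funD; apply: measurable_fun_ifT => //. all: try (apply: measurable_fun_ler => //; exact: dotp_meas).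
by apply: measurable_funB => //; exact: measurable_cst.
Qed.

Lemma margin_meas gamma w : measurable (margin_set gamma w : set (Rvec R d)).
Proof.
have := measurableT_comp (@normr_measurable R setT) (dotp_meas w) measurableT
  (@measurable_itv R `[gamma, +oo[).
rewrite setTI; congr measurable; apply/seteqP; split => x /=;
  by rewrite in_itv /= andbT.
Qed.
End S.
End Helpers.

Lemma key (R : realType) (d : nat) (P : probability (Rvec R d) R)
  (p : Rvec R d -> R) (Rad gamma : R) (w : 'rV[R]_d) :
  measurable_fun setT p ->
  (forall x, 0 <= p x <= 1) ->
  {ae P, forall x : Rvec R d, norm2 x <= Rad} ->
  0 <= Rad -> 0 < gamma ->
  feasible P gamma w ->
  [/\ 0 <= obj_bar P p gamma w,
      gamma * obj_bar P p gamma w <= obj_tilde P p gamma w &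
      obj_tilde P p gamma w <= Rad * obj_bar P p gamma w].
Proof.
move=> mp p01 aeR R0 g0 [nw PA].
set A := margin_set gamma w.
have mA : measurable A := margin_meas gamma w.
have meta := eta_meas w mp.
have mf : measurable_fun A (EFin \o (fun x => Defs.eta p w x)).
  by apply/measurable_EFinP; exact: measurable_funS meta.
have mg : measurable_fun A (EFin \o (fun x => `|dotp w x| * Defs.eta p w x)).
  apply/measurable_EFinP; apply: measurable_funS (measurableT) _ _ => //.
  apply: measurable_funM => //.
  exact: measurableT_comp (@normr_measurable R setT) (dotp_meas w).
have eta0 x : 0 <= Defs.eta p w x by case/andP: (eta_bounds w (p01 x)).
have eta1 x : Defs.eta p w x <= 1 by case/andP: (eta_bounds w (p01 x)).
set Ef := (\int[P]_(x in A) (Defs.eta p w x)%:E)%E.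
set Eg := (\int[P]_(x in A) (`|dotp w x| * Defs.eta p w x)%:E)%E.
have Ef0 : (0 <= Ef)%E by apply: integral_ge0 => x _; rewrite lee_fin.
have Ef1 : (Ef <= P A)%E.
  rewrite -[X in (_ <= X)%E]mul1e -integral_cst //.
  apply: ge0_le_integral => //.
  all: try by move=> x _; rewrite /= lee_fin.
  all: try exact: measurable_cst.
have PAfin : P A \is a fin_num.
  by rewrite ge0_fin_numE // (le_lt_trans (probability_le1 P mA)) // ltry.
have Effin : Ef \is a fin_num.
  by rewrite ge0_fin_numE // (le_lt_trans Ef1) // -ge0_fin_numE.
have E1 : (gamma%:E * Ef <= Eg)%E.
  rewrite -ge0_integralZl //; try by [move=> x _; rewrite lee_fin | rewrite lee_fin ltW].
  under eq_integral do rewrite -EFinM.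
  apply: ge0_le_integral => //.
  - by move=> x _; rewrite lee_fin mulr_ge0 // ltW.
  - by apply/measurable_EFinP; apply: measurable_funM;
      [exact: measurable_cst | exact: measurable_funS meta].
  - by move=> x Ax; rewrite lee_fin ler_wpM2r //.
have E2 : (Eg <= Rad%:E * Ef)%E.
  rewrite -ge0_integralZl //; try by [move=> x _; rewrite lee_fin | rewrite lee_fin].
  under eq_integral do rewrite -EFinM.
  apply: ae_ge0_le_integral => //.
  - by move=> x _; rewrite lee_fin mulr_ge0.
  - by move=> x _; rewrite lee_fin mulr_ge0.
  - by apply/measurable_EFinP; apply: measurable_funM;
      [exact: measurable_cst | exact: measurable_funS meta].
  - apply: filterS aeR => x hx Ax; rewrite lee_fin ler_wpM2r //.
    apply: (le_trans (CS w x)); apply: (le_trans _ hx).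
    rewrite -[leRHS]mul1r ler_wpM2r // /norm2 sqrtr_ge0 //.
have Eg0 : (0 <= Eg)%E by apply: integral_ge0 => x _; rewrite lee_fin mulr_ge0.
have Egfin : Eg \is a fin_num.
  by rewrite ge0_fin_numE // (le_lt_trans E2) // -(fineK Effin) -EFinM ltry.
have m0 : 0 < fine (P A) by rewrite fine_gt0 // PA /= -ge0_fin_numE // ltW.
rewrite /obj_bar /obj_tilde /condE /Rintegral -/A -/Ef -/Eg.
move: E1 E2 Ef0 Eg0; rewrite -(fineK Effin) -(fineK Egfin).
rewrite !lee_fin => E1 E2 Ef0 Eg0.
split.
- by rewrite divr_ge0 // ltW.
- by rewrite mulrA ler_pM2r // invr_gt0.
- by rewrite mulrA ler_pM2r // invr_gt0.
Qed.

Theorem lemma2p4 (R : realType) (d : nat)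
  (P : probability (Rvec R d) R)          (* marginal D_x on R^d *)
  (p : Rvec R d -> R)                       (* p x = P[y = +1 | x] *)
  (Rad gamma : R) (wt wb : 'rV[R]_d) :
  measurable_fun setT p ->
  (forall x, 0 <= p x <= 1) ->
  ess_sup P (fun x : Rvec R d => (norm2 x)%:E) = Rad%:E ->
  0 < gamma ->
  feasible P gamma wt ->
  (forall w, feasible P gamma w -> obj_tilde P p gamma wt <= obj_tilde P p gamma w) ->
  feasible P gamma wb ->
  (forall w, feasible P gamma w -> obj_bar P p gamma wb <= obj_bar P p gamma w) ->
  gamma / Rad * obj_bar P p gamma wt <= obj_bar P p gamma wb
  /\ obj_bar P p gamma wb <= obj_bar P p gamma wt.
Proof.
move=> mp p01 hR g0 ft optt fb optb.
have aeR : {ae P, forall x : Rvec R d, norm2 x <= Rad}.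
  have := ess_sup_ge P (fun x : Rvec R d => (norm2 x)%:E).
  by rewrite hR; apply: filterS => x; rewrite lee_fin.
have R0 : 0 <= Rad.
  have : (0%:E <= ess_sup P (fun x : Rvec R d => (norm2 x)%:E))%E.
    apply: ess_sup_ger.
      by rewrite [X in (_ < X)%E](_ : _ = 1%E) ?lte01 //; exact: probability_setT.
    by move=> t; rewrite lee_fin /norm2 sqrtr_ge0.
  by rewrite hR lee_fin.
have [bt0 bt1 bt2] := @key _ _ P p Rad gamma wt mp p01 aeR R0 g0 ft.
have [bb0 bb1 bb2] := @key _ _ P p Rad gamma wb mp p01 aeR R0 g0 fb.
split; last exact: optb.
have H : gamma * obj_bar P p gamma wt <= Rad * obj_bar P p gamma wb.
  apply: (le_trans bt1); apply: (le_trans (optt _ fb)); exact: bb2.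
have [->|Rp] := eqVneq Rad 0.
  by rewrite invr0 mulr0 mul0r.
have Rg : 0 < Rad by rewrite lt_def Rp R0.
by rewrite mulrAC ler_pdivrMr // [leRHS]mulrC.
Qed.
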